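(* Let $\mathcal P_{XY}$ be any distribution on $\mathbb R^p\times\mathbb R$ and let $Z_i=(X_i,Y_i)$, $i=1,\dots,n+1$, be i.i.d. draws from $\mathcal P_{XY}$, where $Y_{n+1}$ is unobserved. Let $\mathcal Z$ and $\mathcal X$ denote the unordered sets $\{Z_1,\dots,Z_{n+1}\}$ and $\{X_1,\dots,X_{n+1}\}$. Let $V(z)=V(z;\mathcal Z)$ be a real-valued score function whose form may depend on the data only through $\mathcal Z$, with $V_i=V(Z_i;\mathcal Z)$, and let $H:\mathbb R^p\times\mathbb R^p\to[0,1]$ be a localizer whose form may depend on the data only through $\mathcal X$, with $H(x,x)=1$. Put $H_{ij}=H(X_i,X_j)$, $p^H_{ij}=H_{ij}/\sum_{k=1}^{n+1}H_{ik}$, $\hat{\mathcal F}_i=\sum_{j=1}^{n+1}p^H_{ij}\delta_{V_j}$ for $i=1,\dots,n+1$, $\hat{\mathcal F}=\sum_{j=1}^{n}p^H_{n+1,j}\delta_{V_j}+p^H_{n+1,n+1}\delta_{+\infty}$, and $\Gamma=\{\sum_{k\in I}p^H_{ik}: i\in\{1,\dots,n+1\},\ I\subseteq\{1,\dots,n+1\}\}$. Fix $\alpha\in(0,1)$. For each $y\in\mathbb R$, let $\tilde\alpha(y)$ be the smallest value in $\Gamma$ such that $\frac{1}{n+1}\sum_{i=1}^{n+1}\mathbb 1\{V_i\le Q(\tilde\alpha(y);\hat{\mathcal F}_i)\}\ge\alpha$, where all scores and weighted distributions are evaluated with $Z_{n+1}$ replaced by $(X_{n+1},y)$. Define $C(X_{n+1})=\{y: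 V_{n+1}\le Q(\tilde\alpha(y);\hat{\mathcal F})\}$, where again $V_{n+1}=V((X_{n+1},y);\mathcal Z)$ and $\hat{\mathcal F}$ are evaluated at $Z_{n+1}=(X_{n+1},y)$. Then $\mathbb P\{Y_{n+1}\in C(X_{n+1})\}\ge\alpha$.
   Context: For a distribution $\mathcal F$ on $\mathbb R\cup\{+\infty\}$, $Q(\alpha;\mathcal F)=\inf\{t:\mathbb P_{T\sim\mathcal F}(T\le t)\ge\alpha\}$. $\delta_v$ is the point mass at $v$. *)

(* Defs.v *)
From HB Require Import structures.
From mathcomp Require Import all_boot all_order all_algebra.
From mathcomp Require Import all_classical all_reals all_analysis.
Set Implicit Arguments. Unset Strict Implicit. Unset Printing Implicit Defensive.
Import Order.TTheory GRing.Theory Num.Theory.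
Local Open Scope classical_set_scope.
Local Open Scope ring_scope.

Section LCP.
Variable R : realType.

(* Quantile Q(alpha; F) = inf { t in R : P_{T ~ F}(T <= t) >= alpha } of the
   finitely supported distribution F = \sum_j w j \delta_{v j} on R \cup {+oo}. *)
Definition wcdf m (w : 'I_m -> R) (v : 'I_m -> \bar R) (t : \bar R) : R :=
  \sum_(j < m | (v j <= t)%E) w j.

Definition wquantile m (alpha : R) (w : 'I_m -> R) (v : 'I_m -> \bar R) : \bar R :=
  ereal_inf [set t%:E | t in [set t : R | alpha <= wcdf w v t%:E]].

Variable p n : nat.
Notation Xp := (p.-tuple R).
Notation Zt := (Xp * R)%type.

Variable V : Zt -> (n.+1).-tuple Zt -> R.
Variable H : Xp -> Xp -> (n.+1).-tuple Xp -> R.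
Variable alpha : R.

Section Data.
(* s : the (n+1) data points, the last one (index ord_max) being the test point *)
Variable s : (n.+1).-tuple Zt.

Definition covs : (n.+1).-tuple Xp := [tuple (tnth s i).1 | i < n.+1].
Definition Hm (i j : 'I_n.+1) : R := H (tnth covs i) (tnth covs j) covs.
Definition pH (i j : 'I_n.+1) : R := Hm i j / \sum_(k < n.+1) Hm i k.
Definition Vs (i : 'I_n.+1) : R := V (tnth s i) s.

(* \hat F_i = \sum_j pH i j \delta_{V_j} *)
Definition Fi_vals (j : 'I_n.+1) : \bar R := (Vs j)%:E.
(* \hat F = \sum_{j <= n} pH (n+1) j \delta_{V_j} + pH (n+1) (n+1) \delta_{+oo} *)
Definition Fhat_vals (j : 'I_n.+1) : \bar R :=
  if j == ord_max then +oo%E else (Vs j)%:E.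

Definition Gamma : set R :=
  [set g | exists (i : 'I_n.+1) (I : {set 'I_n.+1}), g = \sum_(k in I) pH i k].

Definition alpha_cond (g : R) : Prop :=
  alpha <= (n.+1)%:R^-1 *
    \sum_(i < n.+1) (((Vs i)%:E <= wquantile g (pH i) Fi_vals)%E : nat)%:R.

Definition alpha_tilde : R := inf [set g | Gamma g /\ alpha_cond g].

Definition covered : Prop :=
  ((Vs ord_max)%:E <= wquantile alpha_tilde (pH ord_max) Fhat_vals)%E.
End Data.

Definition with_y (s : (n.+1).-tuple Zt) (y : R) : (n.+1).-tuple Zt :=
  [tuple (if i == ord_max then ((tnth s i).1, y) else tnth s i) | i < n.+1].

(* C(X_{n+1}) = { y : V_{n+1} <= Q(alpha_tilde(y); \hat F) }, all evaluated at
   Z_{n+1} = (X_{n+1}, y); it depends on s only through Z_1..Z_n and X_{n+1}. *)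
Definition conf_set (s : (n.+1).-tuple Zt) : set R :=
  [set y | covered (with_y s y)].

End LCP.

Definition mutually_independent {R : realType} {d d' : measure_display}
  {Omega : measurableType d} {T : measurableType d'} (P : probability Omega R)
  (m : nat) (Zs : 'I_m -> Omega -> T) : Prop :=
  forall A : 'I_m -> set T, (forall i, measurable (A i)) ->
    P (\bigcap_(i in [set: 'I_m]) (Zs i @^-1` A i)) =
    (\prod_(i < m) P (Zs i @^-1` A i))%E.

Definition identically_distributed {R : realType} {d d' : measure_display}
  {Omega : measurableType d} {T : measurableType d'} (P : probability Omega R)
  (m : nat) (Zs : 'I_m.+1 -> Omega -> T) : Prop :=
  forall (i : 'I_m.+1) (A : set T), measurable A ->
    P (Zs i @^-1` A) = P (Zs ord0 @^-1` A).

(* Main.v *)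
Require Import Defs.
From HB Require Import structures.
From mathcomp Require Import all_boot all_order all_algebra all_fingroup.
From mathcomp Require Import all_classical all_reals all_analysis.
Import Order.TTheory GRing.Theory Num.Theory.
Local Open Scope classical_set_scope.
Local Open Scope ring_scope.
Set Implicit Arguments. Unset Strict Implicit. Unset Printing Implicit Defensive.

Lemma quantile_iff (R : realType) m (g x : R) (w : 'I_m -> R) (v : 'I_m -> \bar R) :
  (forall j, 0 <= w j) ->
  ((x%:E <= wquantile g w v)%E <-> \sum_(j < m | (v j < x%:E)%E) w j < g).
Proof.
move=> w0; split.
- move=> hx; rewrite ltNge; apply/negP => hg.
  pose F j := if v j is r%:E then r else x - 1.
  pose t := \big[Num.max/(x-1)]_(j < m | (v j < x%:E)%E) F j.
  have tx : t < x.
    rewrite /t; elim/big_ind: _ => //.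
    - by rewrite ltrBlDr ltrDl.
    - by move=> a b ha hb; rewrite gt_max ha hb.
    - move=> j hj; rewrite /F; move: hj; case: (v j) => [r| |] //=.
      by move=> _; rewrite ltrBlDr ltrDl.
  have hvt j : (v j < x%:E)%E -> (v j <= t%:E)%E.
    move=> hj; rewrite /t (bigD1 j) //=.
    move: hj; rewrite /F; case: (v j) => [r| |] //= _.
      by rewrite lee_fin le_max lexx.
    by rewrite leNye.
  have : (ereal_inf [set t%:E | t in [set t : R | (g <= wcdf w v t%:E)%R]] <= t%:E)%E.
    apply: ereal_inf_lbound; exists t => //=.
    apply: (le_trans hg); rewrite /wcdf !(big_mkcond (fun j => (v j < _)%E)) !(big_mkcond (fun j => (v j <= _)%E)) /=.
    apply: ler_sum => j _; case: ifP => hj; first by rewrite (hvt j hj).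
    by case: ifP.
  move=> h; have := le_trans hx h; rewrite lee_fin => /(lt_le_trans tx).
  by rewrite ltxx.
- move=> hs; apply: le_ereal_inf_tmp => _ [t ht <-]; rewrite lee_fin.
  rewrite leNgt; apply/negP => tx.
  move: ht => /= ht.
  have : wcdf w v t%:E <= \sum_(j < m | (v j < x%:E)%E) w j.
    rewrite /wcdf !(big_mkcond (fun j => (v j < _)%E)) !(big_mkcond (fun j => (v j <= _)%E)) /=.
    apply: ler_sum => j _; case: ifP => hj; last by case: ifP.
    by rewrite (le_lt_trans hj) // lte_fin.
  move=> h; have := le_lt_trans (le_trans ht h) hs; by rewrite ltxx.
Qed.

Section Det.
Variables (R : realType) (p n : nat).
Notation Zt := (p.-tuple R * R)%type.
Notation tup := ((n.+1).-tuple Zt).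
Variable V : Zt -> tup -> R.
Variable H : p.-tuple R -> p.-tuple R -> (n.+1).-tuple (p.-tuple R) -> R.
Variable alpha : R.
Hypothesis H01 : forall x x' s, 0 <= H x x' s <= 1.
Hypothesis Hdiag : forall x s, H x x s = 1.

Lemma Hm_ge0 s i j : 0 <= Hm H s i j.
Proof. by have /andP[] := H01 (tnth (covs s) i) (tnth (covs s) j) (covs s). Qed.

Lemma Hm_diag s i : Hm H s i i = 1.
Proof. exact: Hdiag. Qed.

Lemma sumHm_ge1 s i : 1 <= \sum_(k < n.+1) Hm H s i k.
Proof.
rewrite (bigD1 i) //= Hm_diag lerDl; apply: sumr_ge0 => k _; exact: Hm_ge0.
Qed.

Lemma sumHm_gt0 s i : 0 < \sum_(k < n.+1) Hm H s i k.
Proof. exact: lt_le_trans ltr01 (sumHm_ge1 s i). Qed.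

Lemma pH_ge0 s i j : 0 <= pH H s i j.
Proof. by rewrite /pH divr_ge0 // ?Hm_ge0 // ltW // sumHm_gt0. Qed.

Lemma sum_pH s i : \sum_(k < n.+1) pH H s i k = 1.
Proof. by rewrite /pH -mulr_suml mulfV // gt_eqF // sumHm_gt0. Qed.

Lemma pH_diag_gt0 s i : 0 < pH H s i i.
Proof. by rewrite /pH Hm_diag divr_gt0 // sumHm_gt0. Qed.

Definition Ssc (s : tup) (i : 'I_n.+1) : R :=
  \sum_(j < n.+1 | Vs V s j < Vs V s i) pH H s i j.

Lemma Ai_iff s i g :
  ((Vs V s i)%:E <= wquantile g (pH H s i) (Fi_vals V s))%E <-> Ssc s i < g.
Proof.
rewrite quantile_iff; last exact: pH_ge0.
by rewrite /Ssc /Fi_vals; under eq_bigl do rewrite lte_fin.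
Qed.

Lemma covered_iff s : covered V H alpha s <-> Ssc s ord_max < alpha_tilde V H alpha s.
Proof.
rewrite /covered quantile_iff; last exact: pH_ge0.
rewrite /Ssc /Fhat_vals; suff -> : \sum_(j < n.+1 | ((if j == ord_max then +oo%E else (Vs V s j)%:E) < (Vs V s ord_max)%:E)%E) pH H s ord_max j = \sum_(j < n.+1 | Vs V s j < Vs V s ord_max) pH H s ord_max j by [].
apply: eq_bigl => j; case: eqP => [->|_]; last by rewrite lte_fin.
by rewrite ltxx.
Qed.

Definition cnt s (g : R) : R := \sum_(i < n.+1) (nat_of_bool (Ssc s i < g)%R)%:R.

Lemma cond_iff s g : alpha_cond V H alpha s g <-> alpha <= (n.+1)%:R^-1 * cnt s g.
Proof.
rewrite /alpha_cond /cnt; suff -> : \sum_(i < n.+1) (((Vs V s i)%:E <= wquantile g (pH H s i) (Fi_vals V s))%E : nat)%:R = cnt s g by [].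
apply: eq_bigr => i _; congr (_%:R); congr nat_of_bool.
by apply/idP/idP => /Ai_iff.
Qed.

Definition Gs s (k : 'I_n.+1 * {set 'I_n.+1}) := \sum_(j in k.2) pH H s k.1 j.

Lemma Gamma_iff s g : Gamma H s g <-> exists k, g = Gs s k.
Proof.
split; first by case=> i [I ->]; exists (i, I).
by case=> -[i I] ->; exists i, I.
Qed.

Hypothesis alpha01 : 0 < alpha < 1.

Lemma cond_one s : alpha_cond V H alpha s (Gs s (ord_max, [set: 'I_n.+1]%SET)).
Proof.
apply/cond_iff.
have -> : Gs s (ord_max, [set: 'I_n.+1]%SET) = 1.
  rewrite /Gs /= -(sum_pH s ord_max); apply: eq_bigl => j; by rewrite inE.
have -> : cnt s 1 = (n.+1)%:R.
  rewrite /cnt (eq_bigr (fun _ => 1)); first by rewrite sumr_const card_ord.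
  move=> i _; suff -> : Ssc s i < 1 by [].
  rewrite -(sum_pH s i) /Ssc [X in _ < X](bigID (fun j => Vs V s j < Vs V s i)) /= ltrDl.
  apply: lt_le_trans (pH_diag_gt0 s i) _.
  rewrite (bigD1 i) ?ltxx //= lerDl; apply: sumr_ge0 => j _; exact: pH_ge0.
by rewrite mulVf ?pnatr_eq0 // ltW //; case/andP: alpha01.
Qed.

Lemma atil_spec s : exists k, [/\ alpha_cond V H alpha s (Gs s k),
  alpha_tilde V H alpha s = Gs s k &
  forall k', alpha_cond V H alpha s (Gs s k') -> Gs s k <= Gs s k'].
Proof.
pose P := fun k => `[< alpha_cond V H alpha s (Gs s k) >].
have P0 : P (ord_max, [set: 'I_n.+1]%SET) by apply/asboolP; exact: cond_one.
case: (Order.TotalTheory.arg_minP (Gs s) P0) => k /asboolP Pk kmin.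
exists k; split => //; last by move=> k' /asboolP /kmin.
apply/le_anti/andP; split.
  apply: ge_inf; last by split; [apply/Gamma_iff; exists k|].
  exists (Gs s k) => _ [/Gamma_iff [k' ->] /asboolP /kmin].
  done.
apply: lb_le_inf; first by exists (Gs s k); split; [apply/Gamma_iff; exists k|].
by move=> _ [/Gamma_iff [k' ->] /asboolP /kmin].
Qed.

Lemma E_iff s i : Ssc s i < alpha_tilde V H alpha s <->
  forall k, alpha_cond V H alpha s (Gs s k) -> Ssc s i < Gs s k.
Proof.
have [k [ck -> kmin]] := atil_spec s.
split; last by apply.
by move=> h k' /kmin; apply: lt_le_trans.
Qed.

Lemma count_ge s : alpha <= (n.+1)%:R^-1 * cnt s (alpha_tilde V H alpha s).
Proof. by have [k [ck -> _]] := atil_spec s; apply/cond_iff. Qed.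

End Det.

Definition permt {T : Type} {m : nat} (s : m.-tuple T) (σ : {perm 'I_m}) : m.-tuple T :=
  [tuple tnth s (σ i) | i < m].

Lemma permt_perm_eq {T : eqType} {m} (s : m.-tuple T) σ : perm_eq (permt s σ) s.
Proof. by apply/tuple_permP; exists σ. Qed.

Lemma permtK {T : Type} {m} (s : m.-tuple T) σ : permt (permt s σ) σ^-1 = s.
Proof. by apply: eq_from_tnth => i; rewrite !tnth_mktuple permKV. Qed.

Section Perm.
Variables (R : realType) (p n : nat).
Notation Zt := (p.-tuple R * R)%type.
Notation tup := ((n.+1).-tuple Zt).
Variable V : Zt -> tup -> R.
Variable H : p.-tuple R -> p.-tuple R -> (n.+1).-tuple (p.-tuple R) -> R.
Variable alpha : R.
Hypothesis HV : forall z (s s' : tup), perm_eq s s' -> V z s = V z s'.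
Hypothesis HH : forall x x' (s s' : (n.+1).-tuple (p.-tuple R)),
      perm_eq s s' -> H x x' s = H x x' s'.
Hypothesis H01 : forall x x' s, 0 <= H x x' s <= 1.
Hypothesis Hdiag : forall x s, H x x s = 1.
Variables (s : tup) (σ : {perm 'I_n.+1}).
Notation t := (permt s σ).

Lemma Vs_perm i : Vs V t i = Vs V s (σ i).
Proof. by rewrite /Vs tnth_mktuple; apply: HV; exact: permt_perm_eq. Qed.

Lemma covs_perm : covs t = permt (covs s) σ.
Proof. by apply: eq_from_tnth => i; rewrite !tnth_mktuple. Qed.

Lemma Hm_perm i j : Hm H t i j = Hm H s (σ i) (σ j).
Proof. by rewrite /Hm covs_perm !tnth_mktuple; apply: HH; exact: permt_perm_eq. Qed.

Lemma pH_perm i j : pH H t i j = pH H s (σ i) (σ j).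
Proof.
rewrite /pH Hm_perm; congr (_ / _).
under eq_bigr do rewrite Hm_perm.
by rewrite [RHS](reindex_inj (@perm_inj _ σ)).
Qed.

Lemma Ssc_perm i : Ssc V H t i = Ssc V H s (σ i).
Proof.
rewrite /Ssc; under eq_bigr do rewrite pH_perm.
under eq_bigl do rewrite !Vs_perm.
by rewrite [RHS](reindex_inj (@perm_inj _ σ)).
Qed.

Lemma cnt_perm g : cnt V H t g = cnt V H s g.
Proof.
rewrite /cnt; under eq_bigr do rewrite Ssc_perm.
by rewrite [RHS](reindex_inj (@perm_inj _ σ)).
Qed.

Lemma cond_perm g : alpha_cond V H alpha t g <-> alpha_cond V H alpha s g.
Proof. by rewrite !(cond_iff _ _ H01 Hdiag) cnt_perm. Qed.

Lemma Gamma_perm g : Gamma H t g -> Gamma H s g.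
Proof.
case=> i [I ->]; exists (σ i), (σ @: I)%SET.
under eq_bigr do rewrite pH_perm.
rewrite big_imset //=; move=> x y _ _; exact: perm_inj.
Qed.
End Perm.

Lemma atil_perm (R : realType) (p n : nat) V H alpha
  (HV : forall z (s s' : (n.+1).-tuple (p.-tuple R * R)%type), perm_eq s s' -> V z s = V z s')
  (HH : forall x x' (s s' : (n.+1).-tuple (p.-tuple R)), perm_eq s s' -> H x x' s = H x x' s')
  (H01 : forall x x' s, 0 <= H x x' s <= 1) (Hdiag : forall x s, H x x s = 1)
  s σ : alpha_tilde V H alpha (permt s σ) = alpha_tilde V H alpha s.
Proof.
rewrite /alpha_tilde; congr inf; apply/seteqP; split => g [hg hc]; split.
- exact: Gamma_perm hg.
- exact: (proj1 (cond_perm alpha HV HH H01 Hdiag s σ g) hc).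
- by rewrite -[s](permtK s σ) in hg; apply: Gamma_perm hg.
- exact: (proj2 (cond_perm alpha HV HH H01 Hdiag s σ g) hc).
Qed.

Section Meas.
Variables (R : realType) (p n : nat).
Notation Zt := (p.-tuple R * R)%type.
Notation tup := ((n.+1).-tuple Zt).
Variable V : Zt -> tup -> R.
Variable H : p.-tuple R -> p.-tuple R -> (n.+1).-tuple (p.-tuple R) -> R.
Variable alpha : R.
Hypothesis H01 : forall x x' s, 0 <= H x x' s <= 1.
Hypothesis Hdiag : forall x s, H x x s = 1.
Hypothesis mV : measurable_fun [set: Zt * tup] (fun q => V q.1 q.2).
Hypothesis mH : measurable_fun [set: (p.-tuple R * p.-tuple R) * (n.+1).-tuple (p.-tuple R)]
    (fun q => H q.1.1 q.1.2 q.2).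

Lemma mset_bool (b : tup -> bool) : measurable_fun setT b -> measurable [set s | b s].
Proof.
move=> mb; have := mb measurableT [set true] (ltac:(by [])).
by rewrite setTI; congr measurable; apply/seteqP; split => x /=.
Qed.

Lemma mVs j : measurable_fun setT (fun s : tup => Vs V s j).
Proof.
change (measurable_fun setT ((fun q => V q.1 q.2) \o (fun s : tup => (tnth s j, s)))).
apply: (measurableT_comp mV); apply: measurable_fun_pair => //.
exact: measurable_tnth.
Qed.

Lemma mcovs : measurable_fun setT (fun s : tup => covs s).
Proof.
apply/measurable_fun_tnthP => i.
rewrite (_ : _ \o _ = fst \o (fun s : tup => tnth s i)); last first.
  by apply: funext => s /=; rewrite tnth_mktuple.
apply: measurableT_comp => //; exact: measurable_tnth.
Qed.

Lemma mHm i j : measurable_fun setT (fun s : tup => Hm H s i j).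
Proof.
change (measurable_fun setT ((fun q => H q.1.1 q.1.2 q.2) \o
  (fun s : tup => ((tnth (covs s) i, tnth (covs s) j), covs s)))).
apply: (measurableT_comp mH); apply: measurable_fun_pair; last exact: mcovs.
apply: measurable_fun_pair.
- exact: (measurableT_comp (measurable_tnth i) mcovs).
- exact: (measurableT_comp (measurable_tnth j) mcovs).
Qed.

Lemma minv : measurable_fun (`]0, +oo[%classic : set R) (@GRing.inv R).
Proof.
apply: measurable_realfun.open_continuous_measurable_fun; first by [apply: rray_open|apply: open_itvoo_subproof|idtac].
move=> x; rewrite inE /= in_itv /= andbT => x0.
by apply: inv_continuous; rewrite gt_eqF.
Qed.

Lemma mpH i j : measurable_fun setT (fun s : tup => pH H s i j).
Proof.
apply: measurable_realfun.measurable_funM; first exact: mHm.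
apply: (measurable_comp _ _ minv).
- exact: measurable_itv.
- move=> _ [s _ <-] /=; rewrite in_itv /= andbT; exact: sumHm_gt0.
- by apply: measurable_sum => k; exact: mHm.
Qed.

Lemma mSsc i : measurable_fun setT (fun s : tup => Ssc V H s i).
Proof.
rewrite /Ssc; under eq_fun do rewrite big_mkcond /=.
apply: measurable_sum => j; apply: measurable_fun_ifT.
- by apply: measurable_realfun.measurable_fun_ltr; exact: mVs.
- exact: mpH.
- exact: measurable_cst.
Qed.

Lemma mGs k : measurable_fun setT (fun s : tup => Gs H s k).
Proof.
rewrite /Gs; under eq_fun do rewrite big_mkcond /=.
apply: measurable_sum => j; case: (j \in k.2).
- exact: mpH.
- exact: measurable_cst.
Qed.

Lemma mcnt k : measurable_fun setT (fun s : tup => cnt V H s (Gs H s k)).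
Proof.
have -> : (fun s : tup => cnt V H s (Gs H s k)) =
   (fun s => \sum_(i < n.+1) (if Ssc V H s i < Gs H s k then 1 else 0)).
  by apply: funext => s; apply: eq_bigr => i _; case: ifP.
apply: measurable_sum => i; apply: measurable_fun_ifT; last 2 first.
- exact: measurable_cst.
- exact: measurable_cst.
by apply: measurable_realfun.measurable_fun_ltr; [exact: mSsc|exact: mGs].
Qed.

Definition Ev (i : 'I_n.+1) : set tup :=
  [set s | Ssc V H s i < alpha_tilde V H alpha s].

Hypothesis alpha01 : 0 < alpha < 1.

Lemma mEv i : measurable (Ev i).
Proof.
have -> : Ev i = \bigcap_(k in [set: 'I_n.+1 * {set 'I_n.+1}])
    (~` [set s | alpha <= (n.+1)%:R^-1 * cnt V H s (Gs H s k)] `|`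
     [set s | Ssc V H s i < Gs H s k]).
  apply/seteqP; split => s /=.
  - move=> /(E_iff V H01 Hdiag alpha01) h k _ /=.
    have [c|c] := pselect (alpha <= (n.+1)%:R^-1 * cnt V H s (Gs H s k)).
      by right; apply: h; apply/(cond_iff V alpha H01 Hdiag).
    by left.
  - move=> h; apply/(E_iff V H01 Hdiag alpha01) => k /(cond_iff V alpha H01 Hdiag) c.
    by case: (h k I).
apply: fin_bigcap_measurable; first exact: finite_finset.
move=> k _; apply: measurableU.
- apply: measurableC; apply: mset_bool.
  apply: measurable_realfun.measurable_fun_ler; first exact: measurable_cst.
  apply: measurable_realfun.measurable_funM; first exact: measurable_cst.
  exact: mcnt.
- by apply: mset_bool; apply: measurable_realfun.measurable_fun_ltr; [exact: mSsc|exact: mGs].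
Qed.
End Meas.

Section Rect.
Variables (d' : measure_display) (Tz : measurableType d') (m : nat).
Notation tup := (m.-tuple Tz).

Definition rect (A : 'I_m -> set Tz) : set tup := [set t | forall i, A i (tnth t i)].
Definition Grect : set (set tup) :=
  [set rect A | A in [set A : 'I_m -> set Tz | forall i, measurable (A i)]].

Lemma rectE A : rect A = \bigcap_(i in [set: 'I_m]) ((fun t : tup => tnth t i) @^-1` A i).
Proof. by apply/seteqP; split => t /= h i; [move=> _; apply: h|apply: h]. Qed.

Lemma mrect A : (forall i, measurable (A i)) -> measurable (rect A).
Proof.
move=> mA; rewrite rectE; apply: fin_bigcap_measurable; first exact: finite_finset.
move=> i _; have := measurable_tnth i measurableT (mA i); by rewrite setTI.
Qed.

Lemma gen_eq : (measurable : set (set tup)) = <<s Grect >>.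
Proof.
rewrite eqEsubset; split; last first.
  apply: smallest_sub; first exact: sigma_algebra_measurable.
  by move=> _ [A mA <-]; exact: mrect.
apply: smallest_sub; first exact: smallest_sigma_algebra.
elim/big_ind: _ => //.
  by move=> X Y hX hY B [/hX|/hY].
move=> i _ B [A mA <-]; apply: sub_sigma_algebra.
exists (fun j => if j == i then A else setT).
  by move=> j; case: (j == i) => //; exact: measurableT.
apply/seteqP; split => t /=.
  by move=> /(_ i); rewrite eqxx.
by move=> [_ h] j; case: eqP => // ->.
Qed.

Lemma setI_Grect : setI_closed Grect.
Proof.
move=> _ _ [A mA <-] [B mB <-]; exists (fun i => A i `&` B i).
  by move=> i; apply: measurableI.
by apply/seteqP; split => t /=; [move=> h; split => i; case: (h i)|move=> [h1 h2] i; split].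
Qed.

Lemma setT_Grect : Grect setT.
Proof.
by exists (fun _ => setT) => //; apply/seteqP; split.
Qed.
End Rect.

Section Exch.
Variables (R : realType) (d d' : measure_display) (Omega : measurableType d)
  (Tz : measurableType d') (P : probability Omega R) (m : nat)
  (Zs : 'I_m.+1 -> Omega -> Tz).
Hypothesis mZ : forall i, measurable_fun [set: Omega] (Zs i).
Hypothesis indep : mutually_independent P Zs.
Hypothesis ident : identically_distributed P Zs.

Definition Fv (w : Omega) : m.+1.-tuple Tz := [tuple Zs i w | i < m.+1].
Definition Fs (σ : {perm 'I_m.+1}) (w : Omega) : m.+1.-tuple Tz := permt (Fv w) σ.

Lemma mFv : measurable_fun setT Fv.
Proof.
apply/measurable_fun_tnthP => i.
rewrite (_ : _ \o _ = Zs i); first exact: mZ.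
by apply: funext => w /=; rewrite tnth_mktuple.
Qed.

Lemma mFs σ : measurable_fun setT (Fs σ).
Proof.
apply/measurable_fun_tnthP => i.
rewrite (_ : _ \o _ = Zs (σ i)); first exact: mZ.
by apply: funext => w /=; rewrite !tnth_mktuple.
Qed.

Lemma Fv_rect A : Fv @^-1` rect A = \bigcap_(i in [set: 'I_m.+1]) (Zs i @^-1` A i).
Proof.
apply/seteqP; split => w /=.
  by move=> h i _; have := h i; rewrite tnth_mktuple.
by move=> h i; rewrite tnth_mktuple; apply: h.
Qed.

Lemma Fs_rect σ A : Fs σ @^-1` rect A =
  \bigcap_(i in [set: 'I_m.+1]) (Zs i @^-1` A (σ^-1 i)%g).
Proof.
apply/seteqP; split => w /=.
  move=> h i _; have := h (σ^-1 i)%g; by rewrite !tnth_mktuple permKV.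
move=> h i; rewrite !tnth_mktuple; have := h (σ i) I; by rewrite /= permK.
Qed.

Lemma prod_ident (A : 'I_m.+1 -> set Tz) : (forall i, measurable (A i)) ->
  (\prod_(i < m.+1) P (Zs i @^-1` A i))%E = (\prod_(i < m.+1) P (Zs ord0 @^-1` A i))%E.
Proof. by move=> mA; apply: eq_bigr => i _; apply: ident. Qed.

Lemma exch σ B : measurable B -> P (Fv @^-1` B) = P (Fs σ @^-1` B).
Proof.
move=> mB.
pose X1 : {mfun Omega >-> m.+1.-tuple Tz} := MeasurableFun.Pack (MeasurableFun.Class (isMeasurableFun.Build _ _ _ _ Fv mFv)).
pose X2 : {mfun Omega >-> m.+1.-tuple Tz} := MeasurableFun.Pack (MeasurableFun.Class (isMeasurableFun.Build _ _ _ _ (Fs σ) (mFs σ))).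
have -> : P (Fv @^-1` B) = distribution P X1 B by [].
have -> : P (Fs σ @^-1` B) = distribution P X2 B by [].
have U := @measure_unique _ R _ (@Grect _ Tz m.+1) (fun _ => setT) (@gen_eq _ Tz m.+1) (@setI_Grect _ Tz m.+1) (fun _ => @setT_Grect _ Tz m.+1) _ (distribution P X1) (distribution P X2).
apply: U => //.
- by rewrite bigcup_const.
- move=> _ [A mA <-].
  change (P (Fv @^-1` rect A) = P (Fs σ @^-1` rect A)).
  rewrite Fv_rect Fs_rect (indep mA) (@indep (fun i => A (σ^-1 i)%g) (fun i => mA _)).
  rewrite (prod_ident mA) (prod_ident (A := fun i => A (σ^-1 i)%g) (fun i => mA _)).
  by rewrite (reindex_inj (@perm_inj _ σ^-1%g)) /=.
- by move=> _; change (P (Fv @^-1` setT) < +oo)%E; rewrite preimage_setT probability_setT ltry.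
Qed.
End Exch.

Unset Implicit Arguments. Set Strict Implicit.

Theorem corollary1 (R : realType) (p n : nat)
  (d : measure_display) (Omega : measurableType d) (P : probability Omega R)
  (Zs : 'I_n.+1 -> Omega -> (p.-tuple R * R)%type)
  (V : (p.-tuple R * R)%type -> (n.+1).-tuple (p.-tuple R * R)%type -> R)
  (H : p.-tuple R -> p.-tuple R -> (n.+1).-tuple (p.-tuple R) -> R)
  (alpha : R) :
  (forall i, measurable_fun [set: Omega] (Zs i)) ->
  mutually_independent P Zs ->
  identically_distributed P Zs ->
  (forall z (s s' : (n.+1).-tuple (p.-tuple R * R)%type),
      perm_eq s s' -> V z s = V z s') ->
  (forall x x' (s s' : (n.+1).-tuple (p.-tuple R)),
      perm_eq s s' -> H x x' s = H x x' s') ->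
  (forall x x' s, 0 <= H x x' s <= 1) ->
  (forall x s, H x x s = 1) ->
  measurable_fun [set: (p.-tuple R * R) * (n.+1).-tuple (p.-tuple R * R)]
    (fun q => V q.1 q.2) ->
  measurable_fun [set: (p.-tuple R * p.-tuple R) * (n.+1).-tuple (p.-tuple R)]
    (fun q => H q.1.1 q.1.2 q.2) ->
  0 < alpha < 1 ->
  (alpha%:E <=
     P [set w | conf_set V H alpha [tuple Zs i w | i < n.+1] (Zs ord_max w).2])%E.
Proof.
move=> mZ indep ident HV HH H01 Hdiag mV mH alpha01.
pose X i := Fv Zs @^-1` Ev V H alpha i.
have mX i : measurable (X i).
  have := mFv mZ measurableT (mEv H01 Hdiag mV mH alpha01 i).
  by rewrite setTI.
have -> : [set w | conf_set V H alpha [tuple Zs i w | i < n.+1] (Zs ord_max w).2] = X ord_max.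
  apply/seteqP; split => w /=; rewrite /conf_set /=.
  - have -> : with_y [tuple Zs i w | i < n.+1] (Zs ord_max w).2 = Fv Zs w.
      apply: eq_from_tnth => i; rewrite !tnth_mktuple.
      by case: eqP => [->|//]; rewrite -surjective_pairing.
    by move/(covered_iff V alpha H01 Hdiag).
  - have -> : with_y [tuple Zs i w | i < n.+1] (Zs ord_max w).2 = Fv Zs w.
      apply: eq_from_tnth => i; rewrite !tnth_mktuple.
      by case: eqP => [->|//]; rewrite -surjective_pairing.
    by move=> h; apply/(covered_iff V alpha H01 Hdiag).
have Xeq i : P (X i) = P (X ord_max).
  pose σ : {perm 'I_n.+1} := tperm i ord_max.
  rewrite /X (exch mZ indep ident σ (mEv H01 Hdiag mV mH alpha01 ord_max)).
  congr (P _); apply/seteqP; split => w /=; rewrite /Ev /Fs /=;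
    rewrite (Ssc_perm HV HH) (atil_perm alpha HV HH H01 Hdiag) /σ tpermR //.
have hsum : (((n.+1)%:R * alpha)%:E <= \sum_(i < n.+1) P (X i))%E.
  have -> : (\sum_(i < n.+1) P (X i) = \int[P]_w (\sum_(i < n.+1) (\1_(X i) w)%:E))%E.
    rewrite ge0_integral_sum //.
    - apply: eq_bigr => i _; rewrite integral_indic // setIT //.
    - by move=> i; apply/measurable_realfun.measurable_EFinP; exact: measurable_realfun.measurable_indic.
  have hint : (\int[P]_w (((n.+1)%:R * alpha)%:E) <= \int[P]_w (\sum_(i < n.+1) (\1_(X i) w)%:E))%E.
    apply: ge0_le_integral => //.
    - by move=> w _; rewrite lee_fin mulr_ge0 // ltW //; case/andP: alpha01.
    - by apply: emeasurable_sum => i; apply/measurable_realfun.measurable_EFinP; exact: measurable_realfun.measurable_indic.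
    move=> w _; rewrite sumEFin lee_fin.
    have hc := count_ge V H01 Hdiag alpha01 (Fv Zs w).
    apply: le_trans (ler_wpM2l (ler0n R n.+1) hc) _.
    rewrite mulrA mulfV ?pnatr_eq0 // mul1r /cnt le_eqVlt; apply/orP; left; apply/eqP.
    apply: eq_bigr => i _; rewrite indicE; congr (_%:R); congr nat_of_bool.
    by apply/idP/idP => h; [apply/mem_set|move: h => /set_mem].
  apply: le_trans hint.
  rewrite integral_cst //; set q := (X in (_ <= _ * X)%E); have -> : q = 1%E by exact: probability_setT.
  by rewrite mule1.
move: hsum; under eq_bigr do rewrite Xeq.
have : P (X ord_max) \is a fin_num by apply: fin_num_measure.
case: (P (X ord_max)) => [r _| //|//].
by rewrite sumEFin sumr_const card_ord !lee_fin -[r *+ _]mulr_natl ler_pM2l // ltr0Sn.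
Qed.
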